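(* Let $G$ be a graph, $r\ge 1$, $L_S=(s_1,\dots,s_n)$ a subordering of $S\subseteq V(G)$, and $v\in V(G)\setminus S$. Let $L_{S\cup\{v\}}$ be any subordering of $S\cup\{v\}$ with $L_{S\cup\{v\}}[S]=L_S$. Then $$\mathrm{Wreach}_r(G,L_{S\cup\{v\}},v)\setminus\{v\}=\{s\in\mathrm{bp}(G,L_S,v) \mid s\preceq_{L_{S\cup\{v\}}} v\}.$$
   Context: All graphs are finite, undirected, without loops. A path has length equal to its number of vertices minus one. A subordering $L_S$ is a linear ordering of $S\subseteq V(G)$; $\preceq_{L_S}$ means precedes or equal; $L_{S'}[S]$ is the restriction of $L_{S'}$ to $S$. For a subordering $L_S$ and $u,w\in V(G)$, $u\in\mathrm{Wreach}_r(G,L_S,w)$ iff either $u=w$, or $u\in S$ and there is a path $P$ of length at most $r$ between $u$ and $w$ with $u\preceq_{L_S} x$ for all $x\in V(P)\cap S$. For $L_S=(s_1,\dots,s_n)$ and $v\notin S$: $\mathrm{placeafter}(L_S,s_i,v)=(s_1,\dots,s_i,v,s_{i+1},\dots,s_n)$ and $\mathrm{placebefore}(L_S,s_i,v)=(s_1,\dots,s_{i-1},v,s_i,\dots,s_n)$. A vertex $s\in S$ is a breakpoint of $v$ if $\mathrm{Wreach}_r(G,\mathrm{placebefore}(L_S,s,v),v)\ne\mathrm{Wreach}_r(G,\mathrm{placeafter}(L_S,s,v),v)$; $\mathrm{bp}(G,L_S,v)$ is the set of breakpoints of $v$. *)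

(* Defs.v *)
From mathcomp Require Import all_boot.
Set Implicit Arguments. Unset Strict Implicit. Unset Printing Implicit Defensive.

(* A graph: vertex type T : finType, adjacency e : rel T, assumed symmetric
   and irreflexive in the theorem.  A subordering L_S of S is a duplicate-free
   sequence L : seq T; S is the set of its elements. *)

Definition preceq (T : eqType) (L : seq T) (x y : T) : bool :=
  [&& x \in L, y \in L & index x L <= index y L].

Definition is_path_le (T : eqType) (e : rel T) (r : nat) (u w : T) (p : seq T) : Prop :=
  [/\ path e u p, last u p = w, uniq (u :: p) & size p <= r].

Definition Wreach (T : eqType) (e : rel T) (r : nat) (L : seq T) (w u : T) : Prop :=
  u = w \/
  (u \in L /\ exists p : seq T, is_path_le e r u w p /\
     forall x, x \in u :: p -> x \in L -> preceq L u x).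

Definition placeafter (T : eqType) (L : seq T) (s v : T) : seq T :=
  take (index s L).+1 L ++ v :: drop (index s L).+1 L.

Definition placebefore (T : eqType) (L : seq T) (s v : T) : seq T :=
  take (index s L) L ++ v :: drop (index s L) L.

Definition breakpoint (T : eqType) (e : rel T) (r : nat) (L : seq T) (v s : T) : Prop :=
  s \in L /\
  ~ (forall x, Wreach e r (placebefore L s v) v x <-> Wreach e r (placeafter L s v) v x).

(* Main.v *)
From Stdlib Require Import Classical.
Require Import Defs.
From mathcomp Require Import all_boot.

Lemma idx_filter (T : eqType) (a : pred T) (P : seq T) x y :
  a x -> a y -> x \in P -> y \in P ->
  (index x (filter a P) <= index y (filter a P)) = (index x P <= index y P).
Proof.
move=> ax ay; elim: P => [|z P IH] //=.
rewrite !in_cons => xP yP.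
have [zx|zx] := eqVneq z x.
  by subst z; rewrite ax /= eqxx.
have [zy|zy] := eqVneq z y.
  by subst z; rewrite ay /= eqxx (negbTE zx).
rewrite eq_sym (negbTE zx) /= in xP; rewrite eq_sym (negbTE zy) /= in yP.
case: (a z) => /=; last by rewrite IH.
by rewrite (negbTE zx) (negbTE zy) ltnS IH.
Qed.

Lemma preceq_filter (T : eqType) (L P : seq T) x y :
  filter (fun z => z \in L) P = L -> x \in L -> y \in L ->
  preceq P x y = preceq L x y.
Proof.
move=> fE xL yL.
have xP : x \in P by move: xL; rewrite -{1}fE mem_filter => /andP[].
have yP : y \in P by move: yL; rewrite -{1}fE mem_filter => /andP[].
rewrite /preceq xP yP xL yL /=.
by by rewrite -(@idx_filter _ (fun z => z \in L)) // fE.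
Qed.

Arguments preceq_filter {T L P x y}.

Lemma pos_cat (T : eqType) (s1 s2 : seq T) v x :
  v \notin s1 -> x != v -> preceq (s1 ++ v :: s2) x v = (x \in s1).
Proof.
move=> vs1 xv; rewrite /preceq !mem_cat !in_cons eqxx !orbT /=.
rewrite !index_cat (negbTE vs1) /= eqxx addn0.
case xs1: (x \in s1) => /=.
  by rewrite ltnW // index_mem.
by rewrite [v == x]eq_sym (negbTE xv) /= addnS ltnNge leq_addr andbF.
Qed.

Definition Cx (T : eqType) (e : rel T) r (L : seq T) v x :=
  exists p, is_path_le e r x v p /\
     forall y, y \in x :: p -> y \in L -> preceq L x y.
Arguments Cx {T}.

Lemma W (T : eqType) (e : rel T) r (L P : seq T) v x :
  (forall y, (y \in P) = (y == v) || (y \in L)) ->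
  filter (fun z => z \in L) P = L -> v \notin L -> x \in L ->
  Wreach e r P v x <-> (preceq P x v /\ Cx e r L v x).
Proof.
move=> memP fE vL xL; split.
  case=> [xv|[xP [p [Hp Hc]]]].
    by subst x; rewrite xL in vL.
  have vin : v \in x :: p by case: Hp => _ <- _ _; apply: mem_last.
  split; first by apply: Hc => //; rewrite memP eqxx.
  exists p; split => // y yp yL.
  rewrite -(preceq_filter fE) //; apply: Hc => //.
  by rewrite memP yL orbT.
case=> pv [p [Hp Hc]]; right; split; first by rewrite memP xL orbT.
exists p; split => // y yp; rewrite memP => /orP[/eqP ->//|yL].
by rewrite (preceq_filter fE) //; apply: Hc.
Qed.
Arguments W {T} e r {L P v x}.

Theorem lemma5 (T : finType) (e : rel T) (r : nat) (L : seq T) (v : T)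
    (L' : seq T) :
  symmetric e -> irreflexive e -> 1 <= r ->
  uniq L -> v \notin L ->
  uniq L' -> perm_eq L' (v :: L) -> filter (fun x => x \in L) L' = L ->
  forall u : T,
    (Wreach e r L' v u /\ u <> v) <-> (breakpoint e r L v u /\ preceq L' u v).
Proof.
move=> _ _ _ uL vL uL' pL' fL' u.
have memL' : forall y, (y \in L') = (y == v) || (y \in L).
  by move=> y; rewrite (perm_mem pL') in_cons.
have memI : forall n y, (y \in take n L ++ v :: drop n L) = (y == v) || (y \in L).
  move=> n y; rewrite mem_cat in_cons orbCA -mem_cat cat_take_drop //.
have filI : forall n, filter (fun z => z \in L) (take n L ++ v :: drop n L) = L.
  move=> n; rewrite filter_cat /= (negbTE vL) -filter_cat cat_take_drop.
  by apply/all_filterP/allP.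
have posI : forall n x, x \in L ->
    preceq (take n L ++ v :: drop n L) x v = (index x L < n).
  move=> n x xL; rewrite pos_cat; first by rewrite in_take.
    by apply/negP => /mem_take; rewrite (negbTE vL).
  by apply/eqP => xv; subst x; rewrite xL in vL.
rewrite /breakpoint /placebefore /placeafter.
split.
  case=> Hw uv.
  have uL0 : u \in L.
    case: Hw => [//|[uP _]]; move: uP; rewrite memL' => /orP[/eqP//|//].
  have [pv Cu] := (W e r memL' fL' vL uL0).1 Hw.
  split => //; split => // Hall.
  have := (Hall u).2; rewrite !(W e r (memI _) (filI _) vL uL0) !posI //.
  by rewrite ltnSn ltnn => /(_ (conj isT Cu)) [].
case=> [[uL0 Hbp] pv].
split; last by move=> uv; subst u; rewrite uL0 in vL.
apply/(W e r memL' fL' vL uL0); split => //.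
apply: NNPP => nC; apply: Hbp => x.
have [->|xv] := eqVneq x v; first by split => _; left.
case xL: (x \in L); last first.
  split; case => [/eqP|[]]; rewrite ?(negbTE xv) ?memI ?(negbTE xv) ?xL //.
rewrite !(W e r (memI _) (filI _) vL xL) !posI //.
have [xu|xu] := eqVneq x u.
  by subst x; split => -[].
have ne : index x L != index u L.
  by apply: contra xu => /eqP H; apply/eqP; exact: (index_inj x xL uL0 H).
have E : (index x L < (index u L).+1) = (index x L < index u L).
  by rewrite ltnS leq_eqVlt (negbTE ne).
by rewrite E.
Qed.
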